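(* If $\boldsymbol x^*$ is a pure Nash equilibrium of $\mathcal L(n,S)$, then for every $y\in S$, \[ \min_{i\in N}d(x_i^*,y)\le\frac{2\Lambda}{n}, \] where $\Lambda=\lambda(S)$.
   Context: Network: $(V,E)$ is a finite connected graph with no vertex of degree $2$; each edge $e$ has a length $\lambda(e)>0$. $S$ is the metric measure space obtained by identifying each edge with a segment of length $\lambda(e)$, with length measure $\lambda$ and shortest-path distance $d$. Location game $\mathcal L(n,S)$ with players $N=\{1,\dots,n\}$: each player chooses a point of $S$. Consumers are distributed according to $\lambda$, and each shops at a closest occupied location. Consumers equidistant from several closest occupied locations are split equally among those locations, and the share of a location is split equally among the players located there. Payoff is the mass of consumers attracted. Nash equilibria are pure. *)

(* Defs.v *)
From Stdlib Require Import Reals List ClassicalEpsilon.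
From mathcomp Require Import all_boot.

Set Implicit Arguments.
Unset Strict Implicit.
Unset Printing Implicit Defensive.

Local Open Scope R_scope.

Record network := Network {
  vert : finType;
  edge : finType;
  src : edge -> vert;
  tgt : edge -> vert;
  len : edge -> R
}.

(* Points of the metric graph S: a vertex, or an interior point of an edge
   e at distance t from src e (valid when 0 < t < len e). *)
Inductive point (G : network) : Type :=
  | Vtx (v : vert G)
  | Int (e : edge G) (t : R).
Arguments Vtx {G} v.
Arguments Int {G} e t.

Definition valid_point (G : network) (p : point G) : Prop :=
  match p with
  | Vtx _ => True
  | Int e t => 0 < t < len e
  end.

Definition point_eq_dec (G : network) (p q : point G) : {p = q} + {p <> q}.
Proof.
  decide equality; try apply Req_EM_T; apply: eq_comparable.
Defined.

(* degree of a vertex (the graph has no loops, see hypotheses of the theorem) *)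
Definition degree (G : network) (v : vert G) : nat :=
  #|[pred e : edge G | (src e == v) || (tgt e == v)]|.

Inductive walk_len (G : network) : vert G -> vert G -> R -> Prop :=
  | walk_nil u : walk_len u u 0
  | walk_fwd e w L : walk_len (tgt e) w L -> walk_len (src e) w (len e + L)
  | walk_bwd e w L : walk_len (src e) w L -> walk_len (tgt e) w (len e + L).

Definition connected_graph (G : network) : Prop :=
  forall u v : vert G, exists L, walk_len u v L.

Definition end_dist (G : network) (p : point G) (a : vert G) (r : R) : Prop :=
  match p with
  | Vtx v => a = v /\ r = 0
  | Int e t => (a = src e /\ r = t) \/ (a = tgt e /\ r = len e - t)
  end.

Definition path_len (G : network) (p q : point G) (L : R) : Prop :=
  (exists e s t, p = Int e s /\ q = Int e t /\ L = Rabs (s - t)) \/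
  (exists a b r1 L0 r2,
      end_dist p a r1 /\ walk_len a b L0 /\ end_dist q b r2 /\ L = r1 + L0 + r2).

Definition dist (G : network) (p q : point G) : R :=
  epsilon (inhabits 0)
    (fun r => path_len p q r /\ forall L, path_len p q L -> r <= L).

Definition total_length (G : network) : R :=
  fold_right Rplus 0 (List.map (@len G) (enum (edge G))).

(* Strategy profiles: players are 0, ..., n-1 *)
Definition profile (G : network) := nat -> point G.

Definition valid_profile (G : network) (n : nat) (x : profile G) : Prop :=
  forall i, (i < n)%N -> valid_point (x i).

Definition update (G : network) (x : profile G) (i : nat) (p : point G) : profile G :=
  fun j => if Nat.eqb j i then p else x j.

(* min_{i in N} d(x_i, y)  (for n >= 1) *)
Definition mind (G : network) (n : nat) (x : profile G) (y : point G) : R :=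
  fold_right Rmin (dist (x 0%nat) y)
    (List.map (fun i => dist (x i) y) (List.seq 0 n)).

Definition closest_players (G : network) (n : nat) (x : profile G) (y : point G) :=
  List.filter (fun j => if Req_EM_T (dist (x j) y) (mind n x y) then true else false)
    (List.seq 0 n).

Definition n_closest_locs (G : network) (n : nat) (x : profile G) (y : point G) : nat :=
  length (nodup (@point_eq_dec G) (List.map x (closest_players n x y))).

Definition n_colocated (G : network) (n : nat) (x : profile G) (i : nat) : nat :=
  length (List.filter (fun j => if point_eq_dec (x j) (x i) then true else false)
            (List.seq 0 n)).

Definition share (G : network) (n : nat) (x : profile G) (i : nat) (y : point G) : R :=
  if Req_EM_T (dist (x i) y) (mind n x y)
  then / (INR (n_closest_locs n x y) * INR (n_colocated n x i))
  else 0.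

(* Riemann integral of f on [a,b] (0 if f is not Riemann integrable). *)
Definition integral (f : R -> R) (a b : R) : R :=
  match excluded_middle_informative (inhabited (Riemann_integrable f a b)) with
  | left h => RiemannInt (epsilon h (fun _ => True))
  | right _ => 0
  end.

(* payoff: lambda-mass of consumers attracted, integrating edge by edge *)
Definition payoff (G : network) (n : nat) (x : profile G) (i : nat) : R :=
  fold_right Rplus 0
    (List.map (fun e => integral (fun t => share n x i (Int e t)) 0 (len e))
       (enum (edge G))).

Definition nash_eq (G : network) (n : nat) (x : profile G) : Prop :=
  valid_profile n x /\
  forall i (p : point G), (i < n)%N -> valid_point p ->
    payoff n (update x i p) i <= payoff n x i.

(* Main.v *)
Require Import Defs.
From Stdlib Require Import Reals List Lra Lia ClassicalEpsilon ZArith RList RiemannInt_SF RiemannInt.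
From mathcomp Require Import all_boot.
Set Implicit Arguments.
Unset Strict Implicit.
Set Bullet Behavior "Strict Subproofs".
Local Open Scope R_scope.
Local Notation dist := Defs.dist (only parsing).


Lemma walk_nonneg (G : network) (lp : forall e : edge G, 0 < len e) (u w : vert G) L :
  walk_len u w L -> 0 <= L.
Proof. induction 1; [lra| pose proof (lp e); lra | pose proof (lp e); lra]. Qed.

Lemma walk_app (G : network) (u v : vert G) L1 :
  walk_len u v L1 -> forall w L2, walk_len v w L2 -> walk_len u w (L1 + L2).
Proof.
  induction 1; intros w' L2 H2.
  - replace (0 + L2) with L2 by ring; exact H2.
  - replace (len e + L + L2) with (len e + (L + L2)) by ring; constructor; auto.
  - replace (len e + L + L2) with (len e + (L + L2)) by ring; constructor; auto.
Qed.

Lemma walk_edge_fwd (G : network) (e : edge G) : walk_len (src e) (tgt e) (len e).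
Proof. replace (len e) with (len e + 0) by ring; constructor; constructor. Qed.
Lemma walk_edge_bwd (G : network) (e : edge G) : walk_len (tgt e) (src e) (len e).
Proof. replace (len e) with (len e + 0) by ring; constructor; constructor. Qed.

Lemma walk_rev (G : network) (u w : vert G) L : walk_len u w L -> walk_len w u L.
Proof.
  induction 1.
  - constructor.
  - rewrite Rplus_comm; apply walk_app with (tgt e); auto; apply walk_edge_bwd.
  - rewrite Rplus_comm; apply walk_app with (src e); auto; apply walk_edge_fwd.
Qed.


Lemma in_seqP (T : eqType) (x : T) (s : seq T) : x \in s -> In x s.
Proof.
  elim: s => [|a s IH] //=. rewrite in_cons => /orP [/eqP ->|H]; [left|right; auto]; auto.
Qed.

Lemma in_enum_edge (G : network) (e : edge G) : In e (enum (edge G)).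
Proof. apply in_seqP. by rewrite mem_enum. Qed.

Definition lmin (G : network) : R := fold_right Rmin 1 (List.map (@len G) (enum (edge G))).

Lemma lmin_pos (G : network) (lp : forall e : edge G, 0 < len e) : 0 < lmin G.
Proof.
  unfold lmin. induction (enum (edge G)) as [|a l IH]; simpl; [lra|].
  apply Rmin_glb_lt; auto.
Qed.

Lemma lmin_le (G : network) (e : edge G) : lmin G <= len e.
Proof.
  unfold lmin. pose proof (in_enum_edge e) as H. revert H.
  induction (enum (edge G)) as [|a l IH]; simpl; [tauto|].
  intros [->|H]; [apply Rmin_l|]. eapply Rle_trans; [apply Rmin_r| auto].
Qed.

Definition hasmin (S : R -> Prop) :=
  (exists x, S x) -> exists m, S m /\ forall x, S x -> m <= x.

Fixpoint lens (G : network) (k : nat) (a b : vert G) : list R :=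
  match k with
  | O => if a == b then 0 :: nil else nil
  | S k' => flat_map (fun e =>
       (if src e == a then List.map (Rplus (len e)) (lens k' (tgt e) b) else nil) ++
       (if tgt e == a then List.map (Rplus (len e)) (lens k' (src e) b) else nil))
       (enum (edge G))
  end.

Lemma lens_walk (G : network) k (a b : vert G) L : In L (lens k a b) -> walk_len a b L.
Proof.
  revert a L; induction k as [|k IH]; intros a L; simpl.
  - case: eqP => [->|_] /=; [intros [<-|[]]; constructor| tauto].
  - rewrite in_flat_map. intros [e [_ H]]. apply in_app_or in H. destruct H as [H|H].
    + revert H; case: eqP => [<-|_]; [|simpl; tauto].
      rewrite in_map_iff. intros [L' [<- H]]. constructor. auto.
    + revert H; case: eqP => [<-|_]; [|simpl; tauto].
      rewrite in_map_iff. intros [L' [<- H]]. constructor. auto.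
Qed.

Lemma walk_lens (G : network) (a b : vert G) L : walk_len a b L -> exists k, In L (lens k a b).
Proof.
  induction 1.
  - exists O; simpl. rewrite eqxx. left; auto.
  - destruct IHwalk_len as [k Hk]. exists (S k); simpl. rewrite in_flat_map.
    exists e; split; [apply in_enum_edge|]. apply in_or_app; left. rewrite eqxx.
    apply in_map; auto.
  - destruct IHwalk_len as [k Hk]. exists (S k); simpl. rewrite in_flat_map.
    exists e; split; [apply in_enum_edge|]. apply in_or_app; right. rewrite eqxx.
    apply in_map; auto.
Qed.

Lemma lens_lb (G : network) (lp : forall e : edge G, 0 < len e) k (a b : vert G) L :
  In L (lens k a b) -> INR k * lmin G <= L.
Proof.
  revert a L; induction k as [|k IH]; intros a L.
  - simpl. case: eqP => _ /=; [intros [<-|[]]; lra| tauto].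
  - rewrite S_INR. simpl lens. rewrite in_flat_map. intros [e [_ H]]. pose proof (lmin_le e).
    apply in_app_or in H. destruct H as [H|H].
    + revert H; case: eqP => _; [|simpl; tauto].
      rewrite in_map_iff. intros [L' [<- H]]. specialize (IH _ _ H). lra.
    + revert H; case: eqP => _; [|simpl; tauto].
      rewrite in_map_iff. intros [L' [<- H]]. specialize (IH _ _ H). lra.
Qed.

Definition lens_upto (G : network) (K : nat) (a b : vert G) : list R :=
  flat_map (fun k => lens k a b) (List.seq 0 K).

Lemma list_min (l : list R) x : In x l -> exists m, In m l /\ forall y, In y l -> m <= y.
Proof.
  revert x; induction l as [|a l IH]; intros x Hx; [destruct Hx|].
  destruct l as [|b l'].
  - exists a; split; [left; auto|]. intros y [<-|[]]; lra.
  - destruct (IH b (or_introl erefl)) as [m [Hm1 Hm2]].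
    destruct (Rle_dec a m).
    + exists a; split; [left; auto|]. intros y [<-|Hy]; [lra|]. specialize (Hm2 _ Hy); lra.
    + exists m; split; [right; auto|]. intros y [<-|Hy]; [lra|auto].
Qed.

Lemma walk_hasmin (G : network) (lp : forall e : edge G, 0 < len e) (a b : vert G) :
  hasmin (walk_len a b).
Proof.
  intros [L0 HL0].
  pose proof (lmin_pos lp) as Hm.
  destruct (walk_lens HL0) as [k0 Hk0].
  pose proof (lens_lb lp Hk0) as Hk0b.
  destruct (archimed (L0 / lmin G)) as [Hup _].
  set K := Z.to_nat (up (L0 / lmin G)).
  assert (HK : L0 < INR K * lmin G).
  { unfold K. pose proof (walk_nonneg lp HL0).
    assert (0 <= IZR (up (L0 / lmin G))).
    { assert (0 <= L0 / lmin G) by (unfold Rdiv; apply Rmult_le_pos; [lra|left; apply Rinv_0_lt_compat; lra]). lra. }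
    rewrite INR_IZR_INZ Z2Nat.id; [|apply le_IZR; auto].
    apply Rmult_lt_reg_r with (/ lmin G); [apply Rinv_0_lt_compat; lra|].
    rewrite Rmult_assoc Rinv_r; [|lra]. unfold Rdiv in Hup. lra. }
  assert (Hin : forall L k, In L (lens k a b) -> L <= L0 -> In L (lens_upto K a b)).
  { intros L k HL HLL. unfold lens_upto. apply in_flat_map. exists k; split; auto.
    apply in_seq. pose proof (lens_lb lp HL).
    assert (INR k < INR K).
    { apply Rmult_lt_reg_r with (lmin G); lra. }
    apply INR_lt in H0. lia. }
  destruct (list_min (Hin L0 k0 Hk0 (Rle_refl _))) as [m [Hm1 Hm2]].
  exists m; split.
  - unfold lens_upto in Hm1. apply in_flat_map in Hm1. destruct Hm1 as [k [_ Hk]].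
    eapply lens_walk; eauto.
  - intros x Hx. destruct (Rle_dec x L0).
    + destruct (walk_lens Hx) as [k Hk]. apply Hm2. eapply Hin; eauto.
    + apply Rle_trans with L0; [apply Hm2; apply (Hin L0 k0 Hk0); lra| lra].
Qed.


Definition ends (G : network) (p : point G) : list (vert G * R) :=
  match p with
  | Vtx v => (v, 0) :: nil
  | Int e t => (src e, t) :: (tgt e, len e - t) :: nil
  end.

Lemma ends_iff (G : network) (p : point G) a r : end_dist p a r <-> In (a, r) (ends p).
Proof.
  destruct p as [v|e t]; simpl; split.
  - intros [-> ->]; auto.
  - intros [H|[]]; inversion H; auto.
  - intros [[-> ->]|[-> ->]]; auto.
  - intros [H|[H|[]]]; inversion H; auto.
Qed.

Lemma hasmin_ext (A B : R -> Prop) : (forall x, A x <-> B x) -> hasmin A -> hasmin B.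
Proof.
  intros E H [x Hx]. destruct H as [m [H1 H2]]; [exists x; apply E; auto|].
  exists m; split; [apply E; auto| intros y Hy; apply H2, E; auto].
Qed.


Lemma hasmin_union (A B : R -> Prop) : hasmin A -> hasmin B -> hasmin (fun x => A x \/ B x).
Proof.
  intros HA HB [x0 Hx0].
  destruct (classic (exists x, A x)) as [[a Ha]|nA];
  destruct (classic (exists x, B x)) as [[b Hb]|nB].
  - destruct (HA (ex_intro _ a Ha)) as [m1 [H1 H1']].
    destruct (HB (ex_intro _ b Hb)) as [m2 [H2 H2']].
    destruct (Rle_dec m1 m2).
    + exists m1; split; auto. intros x [Hx|Hx]; auto. specialize (H2' _ Hx); lra.
    + exists m2; split; auto. intros x [Hx|Hx]; auto. specialize (H1' _ Hx); lra.
  - destruct (HA (ex_intro _ a Ha)) as [m1 [H1 H1']].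
    exists m1; split; auto. intros x [Hx|Hx]; auto. exfalso; apply nB; eauto.
  - destruct (HB (ex_intro _ b Hb)) as [m2 [H2 H2']].
    exists m2; split; auto. intros x [Hx|Hx]; auto. exfalso; apply nA; eauto.
  - exfalso. destruct Hx0; [apply nA|apply nB]; eauto.
Qed.

Lemma hasmin_empty : hasmin (fun _ => False).
Proof. intros [x []]. Qed.

Lemma hasmin_funion (I : Type) (l : list I) (F : I -> R -> Prop) :
  (forall i, In i l -> hasmin (F i)) -> hasmin (fun x => exists i, In i l /\ F i x).
Proof.
  induction l as [|i l IH]; intros H.
  - apply hasmin_ext with (fun _ => False); [|apply hasmin_empty].
    intros x; split; [tauto| intros [i [[] _]]].
  - apply hasmin_ext with (fun x => F i x \/ exists j, In j l /\ F j x).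
    + intros x; split.
      * intros [Hx|[j [Hj Hx]]]; [exists i; split; auto; left; auto| exists j; split; auto; right; auto].
      * intros [j [[<-|Hj] Hx]]; [left; auto| right; exists j; auto].
    + apply hasmin_union; [apply H; left; auto| apply IH; intros j Hj; apply H; right; auto].
Qed.

Lemma hasmin_shift (A : R -> Prop) c : hasmin A -> hasmin (fun x => exists y, A y /\ x = c + y).
Proof.
  intros H [x [y [Hy ->]]]. destruct H as [m [H1 H2]]; [eauto|].
  exists (c + m); split; [eauto|]. intros z [w [Hw ->]]. specialize (H2 _ Hw); lra.
Qed.

Lemma hasmin_sub (A : R -> Prop) : (forall x y, A x -> A y -> x = y) -> hasmin A.
Proof.
  intros H [x Hx]. exists x; split; auto. intros y Hy; rewrite (H x y Hx Hy); lra.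
Qed.

Lemma path_len_hasmin (G : network) (lp : forall e : edge G, 0 < len e) (p q : point G) :
  hasmin (path_len p q).
Proof.
  unfold path_len. apply hasmin_union.
  - apply hasmin_sub. intros x y [e [s [t [-> [-> ->]]]]] [e' [s' [t' [H1 [H2 ->]]]]].
    inversion H1; inversion H2; subst; auto.
  - eapply hasmin_ext; [|apply (@hasmin_funion _ (list_prod (ends p) (ends q))
       (fun ab L => exists L0, walk_len (fst (fst ab)) (fst (snd ab)) L0 /\
                               L = (snd (fst ab) + snd (snd ab)) + L0))].
    + intros L; split.
      * intros [[[a r1] [b r2]] [Hin [L0 [HL0 ->]]]]. simpl in *.
        apply in_prod_iff in Hin. destruct Hin as [H1 H2].
        exists a, b, r1, L0, r2. repeat split; try apply ends_iff; auto. ring.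
      * intros [a [b [r1 [L0 [r2 [H1 [H2 [H3 ->]]]]]]]].
        exists ((a, r1), (b, r2)); split.
        -- apply in_prod_iff; split; apply ends_iff; auto.
        -- exists L0; split; auto. simpl; ring.
    + intros [[a r1] [b r2]] _. simpl.
      apply hasmin_ext with (fun x => exists y, walk_len a b y /\ x = (r1 + r2) + y);
        [intros; tauto|].
      apply hasmin_shift, walk_hasmin; auto.
Qed.

Lemma ends_nonempty (G : network) (p : point G) : exists a r, end_dist p a r.
Proof.
  destruct p as [v|e t]; simpl; [exists v, 0; auto| exists (src e), t; auto].
Qed.

Lemma path_len_ex (G : network) (conn : connected_graph G) (p q : point G) :
  exists L, path_len p q L.
Proof.
  destruct (ends_nonempty p) as [a [r1 H1]]. destruct (ends_nonempty q) as [b [r2 H2]].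
  destruct (conn a b) as [L0 HL0]. exists (r1 + L0 + r2). right.
  exists a, b, r1, L0, r2; auto.
Qed.

Lemma dist_spec (G : network) (lp : forall e : edge G, 0 < len e) (conn : connected_graph G)
  (p q : point G) :
  path_len p q (dist p q) /\ forall L, path_len p q L -> dist p q <= L.
Proof.
  unfold dist. apply epsilon_spec.
  destruct (@path_len_hasmin G lp p q (path_len_ex conn p q)) as [m Hm]. exists m; auto.
Qed.


Lemma end_nonneg (G : network) (p : point G) a r : valid_point p -> end_dist p a r -> 0 <= r.
Proof.
  destruct p as [v|e t]; simpl; [intros _ [_ ->]; lra|].
  intros H [[_ ->]|[_ ->]]; lra.
Qed.

Lemma path_nonneg (G : network) (lp : forall e : edge G, 0 < len e) (p q : point G) L :
  valid_point p -> valid_point q -> path_len p q L -> 0 <= L.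
Proof.
  intros Hp Hq [[e [s [t [_ [_ ->]]]]]|[a [b [r1 [L0 [r2 [H1 [H2 [H3 ->]]]]]]]]].
  - apply Rabs_pos.
  - pose proof (end_nonneg Hp H1). pose proof (end_nonneg Hq H3).
    pose proof (walk_nonneg lp H2). lra.
Qed.

Lemma path_sym (G : network) (p q : point G) L : path_len p q L -> path_len q p L.
Proof.
  intros [[e [s [t [-> [-> ->]]]]]|[a [b [r1 [L0 [r2 [H1 [H2 [H3 ->]]]]]]]]].
  - left; exists e, t, s; repeat split; apply Rabs_minus_sym.
  - right; exists b, a, r2, L0, r1; repeat split; auto; [apply walk_rev; auto| ring].
Qed.

Lemma end_unique (G : network) (nl : forall e : edge G, src e <> tgt e) (z : point G) b r r' :
  end_dist z b r -> end_dist z b r' -> r = r'.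
Proof.
  destruct z as [v|e t]; simpl.
  - intros [_ ->] [_ ->]; auto.
  - intros [[-> ->]|[-> ->]] [[H ->]|[H ->]]; auto; exfalso; apply (nl e); auto.
Qed.

Lemma path_tri (G : network) (lp : forall e : edge G, 0 < len e)
  (nl : forall e : edge G, src e <> tgt e) (p z q : point G) L1 L2 :
  valid_point z -> path_len p z L1 -> path_len z q L2 -> exists L, path_len p q L /\ L <= L1 + L2.
Proof.
  intros Hz [[e [s [t [-> [-> ->]]]]]|[a [b [r1 [L0 [r2 [H1 [H2 [H3 ->]]]]]]]]]
             [[e' [s' [t' [E [-> ->]]]]]|[a' [b' [r1' [L0' [r2' [H1' [H2' [H3' ->]]]]]]]]].
  - inversion E; subst. exists (Rabs (s - t')); split; [left; exists e', s, t'; auto|].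
    replace (s - t') with ((s - s') + (s' - t')) by ring. apply Rabs_triang.
  -
    simpl in H1'. destruct H1' as [[-> ->]|[-> ->]].
    + exists (s + L0' + r2'); split.
      * right; exists (src e), b', s, L0', r2'; simpl; intuition.
      * pose proof (Rle_abs (s - t)). lra.
    + exists (len e - s + L0' + r2'); split.
      * right; exists (tgt e), b', (len e - s), L0', r2'; simpl; intuition.
      * pose proof (Rle_abs (t - s)). rewrite Rabs_minus_sym in H. lra.
  -
    rewrite E in H3 Hz; simpl in H3. destruct H3 as [[-> ->]|[-> ->]].
    + exists (r1 + L0 + t'); split.
      * right; exists a, (src e'), r1, L0, t'; simpl; intuition.
      * pose proof (Rle_abs (t' - s')). rewrite Rabs_minus_sym in H. lra.
    + exists (r1 + L0 + (len e' - t')); split.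
      * right; exists a, (tgt e'), r1, L0, (len e' - t'); simpl; intuition.
      * pose proof (Rle_abs (s' - t')). lra.
  -
    destruct (classic (b = a')) as [<-|Hne].
    + pose proof (end_unique nl H3 H1') as <-.
      exists (r1 + (L0 + L0') + r2'); split.
      * right; exists a, b', r1, (L0 + L0'), r2'; repeat split; auto.
        apply walk_app with b; auto.
      * pose proof (end_nonneg Hz H3). lra.
    + destruct z as [v|e t]; simpl in H3, H1'.
      * exfalso; apply Hne; destruct H3, H1'; subst; auto.
      * destruct H3 as [[-> ->]|[-> ->]]; destruct H1' as [[-> ->]|[-> ->]]; try (exfalso; apply Hne; auto; fail).
        -- exists (r1 + (L0 + (len e + L0')) + r2'); split.
           ++ right; exists a, b', r1, (L0 + (len e + L0')), r2'; repeat split; auto.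
              apply walk_app with (src e); auto. constructor; auto.
           ++ lra.
        -- exists (r1 + (L0 + (len e + L0')) + r2'); split.
           ++ right; exists a, b', r1, (L0 + (len e + L0')), r2'; repeat split; auto.
              apply walk_app with (tgt e); auto. constructor; auto.
           ++ lra.
Qed.


Lemma d_le (G : network) (lp : forall e : edge G, 0 < len e) (conn : connected_graph G)
  (p q : point G) L : path_len p q L -> dist p q <= L.
Proof. intros H; apply (proj2 (dist_spec lp conn p q)); auto. Qed.

Lemma d_path (G : network) (lp : forall e : edge G, 0 < len e) (conn : connected_graph G)
  (p q : point G) : path_len p q (dist p q).
Proof. apply (proj1 (dist_spec lp conn p q)). Qed.

Lemma d_nonneg (G : network) (lp : forall e : edge G, 0 < len e) (conn : connected_graph G)
  (p q : point G) : valid_point p -> valid_point q -> 0 <= dist p q.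
Proof. intros Hp Hq; exact (path_nonneg lp Hp Hq (d_path lp conn p q)). Qed.

Lemma d_sym (G : network) (lp : forall e : edge G, 0 < len e) (conn : connected_graph G)
  (p q : point G) : dist p q = dist q p.
Proof.
  apply Rle_antisym; apply d_le; auto; apply path_sym, d_path; auto.
Qed.

Lemma d_refl (G : network) (lp : forall e : edge G, 0 < len e) (conn : connected_graph G)
  (p : point G) : valid_point p -> dist p p = 0.
Proof.
  intros Hp; apply Rle_antisym; [|apply d_nonneg; auto].
  apply d_le; auto. destruct p as [v|e t].
  - right; exists v, v, 0, 0, 0; simpl; repeat split; try constructor; ring.
  - left; exists e, t, t; repeat split. rewrite Rminus_diag Rabs_R0; auto.
Qed.

Lemma d_tri (G : network) (lp : forall e : edge G, 0 < len e)
  (nl : forall e : edge G, src e <> tgt e) (conn : connected_graph G)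
  (p z q : point G) : valid_point z -> dist p q <= dist p z + dist z q.
Proof.
  intros Hz. destruct (path_tri lp nl Hz (d_path lp conn p z) (d_path lp conn z q)) as [L [H1 H2]].
  eapply Rle_trans; [apply d_le; eauto| auto].
Qed.


Lemma dist_Int_src (G : network) (lp : forall e : edge G, 0 < len e) (conn : connected_graph G)
  (e : edge G) t : dist (Int e t) (Vtx (src e)) <= t.
Proof.
  apply d_le; auto. right; exists (src e), (src e), t, 0, 0; simpl; repeat split; auto.
  - constructor.
  - ring.
Qed.

Lemma dist_Int_tgt (G : network) (lp : forall e : edge G, 0 < len e) (conn : connected_graph G)
  (e : edge G) t : dist (Int e t) (Vtx (tgt e)) <= len e - t.
Proof.
  apply d_le; auto. right; exists (tgt e), (tgt e), (len e - t), 0, 0; simpl; repeat split; auto.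
  - constructor.
  - ring.
Qed.

Inductive lexpr := Aff (a b : R) | EMin (x y : lexpr) | EMax (x y : lexpr).

Fixpoint ev (E : lexpr) (t : R) : R :=
  match E with
  | Aff a b => a * t + b
  | EMin x y => Rmin (ev x t) (ev y t)
  | EMax x y => Rmax (ev x t) (ev y t)
  end.

Definition Eq (G : network) (q : point G) (e : edge G) : lexpr :=
  let base := EMin (Aff 1 (dist q (Vtx (src e)))) (Aff (-1) (dist q (Vtx (tgt e)) + len e)) in
  match q with
  | Int e' s => if e' == e then EMin base (EMax (Aff (-1) s) (Aff 1 (-s))) else base
  | Vtx _ => base
  end.

Lemma Rmax_abs s t : Rmax (-1 * t + s) (1 * t + - s) = Rabs (s - t).
Proof.
  unfold Rmax, Rabs. destruct (Rle_dec _ _); destruct (Rcase_abs _); lra.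
Qed.

Lemma dist_formula (G : network) (lp : forall e : edge G, 0 < len e)
  (nl : forall e : edge G, src e <> tgt e) (conn : connected_graph G)
  (q : point G) (e : edge G) t : 0 < t < len e ->
  dist q (Int e t) = ev (Eq q e) t.
Proof.
  intros Ht.
  assert (Hbase : dist q (Int e t) <= ev (EMin (Aff 1 (dist q (Vtx (src e))))
                     (Aff (-1) (dist q (Vtx (tgt e)) + len e))) t).
  { simpl. apply Rmin_glb.
    - eapply Rle_trans; [exact (@d_tri G lp nl conn q (Vtx (src e)) (Int e t) I)|].
      rewrite (d_sym lp conn (Vtx (src e))). pose proof (dist_Int_src lp conn e t). lra.
    - eapply Rle_trans; [exact (@d_tri G lp nl conn q (Vtx (tgt e)) (Int e t) I)|].
      rewrite (d_sym lp conn (Vtx (tgt e))). pose proof (dist_Int_tgt lp conn e t). lra. }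
  assert (Hlow : forall L, path_len q (Int e t) L -> ev (Eq q e) t <= L).
  { intros L [[e' [s [t' [-> [E ->]]]]]|[a [b [r1 [L0 [r2 [H1 [H2 [H3 ->]]]]]]]]].
    - inversion E; subst. simpl. rewrite eqxx. simpl. rewrite Rmax_abs. apply Rmin_r.
    - assert (Hb : ev (EMin (Aff 1 (dist q (Vtx (src e))))
                     (Aff (-1) (dist q (Vtx (tgt e)) + len e))) t <= r1 + L0 + r2).
      { simpl in H3 |- *. destruct H3 as [[-> ->]|[-> ->]].
        - assert (dist q (Vtx (src e)) <= r1 + L0).
          { apply d_le; auto. right; exists a, (src e), r1, L0, 0; simpl; repeat split; auto; ring. }
          eapply Rle_trans; [apply Rmin_l|]. lra.
        - assert (dist q (Vtx (tgt e)) <= r1 + L0).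
          { apply d_le; auto. right; exists a, (tgt e), r1, L0, 0; simpl; repeat split; auto; ring. }
          eapply Rle_trans; [apply Rmin_r|]. lra. }
      destruct q as [v|e' s]; simpl Eq; auto.
      destruct (e' == e); auto. simpl. eapply Rle_trans; [apply Rmin_l|]. exact Hb. }
  apply Rle_antisym; [|apply Hlow, d_path; auto].
  destruct q as [v|e' s]; simpl Eq; auto.
  destruct (e' == e) eqn:E; [move/eqP: E => E; subst e'|auto].
  apply Rmin_glb; [exact Hbase|]. simpl. rewrite Rmax_abs. apply d_le; auto.
  left; exists e, s, t; auto.
Qed.


Definition PC (A : Type) (f : R -> A) (a b : R) : Prop :=
  exists L : list R, forall t1 t2, a < t1 -> t1 <= t2 -> t2 < b ->
    (forall p, In p L -> ~ (t1 <= p <= t2)) -> f t1 = f t2.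

Lemma PC_const (A : Type) (c : A) a b : PC (fun _ => c) a b.
Proof. exists nil; auto. Qed.

Lemma PC_comb (A B C : Type) (f : R -> A) (g : R -> B) (h : A -> B -> C) a b :
  PC f a b -> PC g a b -> PC (fun t => h (f t) (g t)) a b.
Proof.
  intros [L1 H1] [L2 H2]. exists (L1 ++ L2). intros t1 t2 ? ? ? Hp.
  rewrite (H1 t1 t2); auto; [rewrite (H2 t1 t2); auto|];
  intros p Hin; apply Hp; apply in_or_app; auto.
Qed.

Lemma PC_map (A B : Type) (f : R -> A) (g : R -> B) a b :
  PC f a b -> (forall t1 t2, a < t1 < b -> a < t2 < b -> f t1 = f t2 -> g t1 = g t2) -> PC g a b.
Proof.
  intros [L H] Hg. exists L. intros t1 t2 ? ? ? Hp. apply Hg; try lra. auto.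
Qed.

Lemma PC_list (A : Type) (F : nat -> R -> A) (l : list nat) a b :
  (forall j, In j l -> PC (F j) a b) -> PC (fun t => List.map (fun j => F j t) l) a b.
Proof.
  induction l as [|j l IH]; intros H; simpl.
  - apply PC_const.
  - apply (@PC_comb _ _ _ (F j) (fun t => List.map (fun j => F j t) l) (fun x y => x :: y)); [apply H; left; auto| apply IH; intros; apply H; right; auto].
Qed.

Definition ble (x y : R) : bool := if Rle_dec x y then true else false.
Definition beq (x y : R) : bool := if Req_EM_T x y then true else false.

Lemma beq_ble x y : beq x y = ble x y && ble y x.
Proof.
  unfold beq, ble. destruct (Req_EM_T x y); destruct (Rle_dec x y); destruct (Rle_dec y x); simpl; auto; lra.
Qed.

Lemma PC_aff a1 b1 a2 b2 a b : PC (fun t => ble (a1 * t + b1) (a2 * t + b2)) a b.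
Proof.
  destruct (Req_EM_T a1 a2) as [<-|Hne].
  - apply PC_map with (f := fun _ => tt); [apply PC_const|].
    intros t1 t2 _ _ _. unfold ble. destruct (Rle_dec _ _); destruct (Rle_dec _ _); auto; exfalso; lra.
  - exists ((b2 - b1) / (a1 - a2) :: nil). intros t1 t2 ? ? ? Hp.
    specialize (Hp _ (or_introl erefl)).
    assert (Hc : forall t, (a1 * t + b1 <= a2 * t + b2) <-> ((a1 - a2) * t <= b2 - b1)) by (intros; split; lra).
    set p := (b2 - b1) / (a1 - a2) in Hp.
    assert (Hpe : (a1 - a2) * p = b2 - b1) by (unfold p; field; lra).
    unfold ble. destruct (Rle_dec (a1 * t1 + b1) _) as [r1|r1]; destruct (Rle_dec (a1 * t2 + b1) _) as [r2|r2]; auto; exfalso;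
    rewrite Hc in r1; rewrite Hc in r2;
    (destruct (Rlt_dec p t1); [|assert (t2 < p) by (destruct (Rle_dec t1 p); [destruct (Rle_dec p t2); [exfalso; apply Hp; auto|lra]|lra])]);
    destruct (Rlt_dec 0 (a1 - a2)); try nra.
Qed.


Lemma ble_minl X Y Z : ble (Rmin X Y) Z = ble X Z || ble Y Z.
Proof. unfold ble, Rmin. repeat destruct (Rle_dec _ _); simpl; auto; lra. Qed.
Lemma ble_maxl X Y Z : ble (Rmax X Y) Z = ble X Z && ble Y Z.
Proof. unfold ble, Rmax. repeat destruct (Rle_dec _ _); simpl; auto; lra. Qed.
Lemma ble_minr X Y Z : ble Z (Rmin X Y) = ble Z X && ble Z Y.
Proof. unfold ble, Rmin. repeat destruct (Rle_dec _ _); simpl; auto; lra. Qed.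
Lemma ble_maxr X Y Z : ble Z (Rmax X Y) = ble Z X || ble Z Y.
Proof. unfold ble, Rmax. repeat destruct (Rle_dec _ _); simpl; auto; lra. Qed.

Lemma PC_bool2 (f g : R -> bool) (h : bool -> bool -> bool) (k : R -> bool) a b :
  PC f a b -> PC g a b -> (forall t, k t = h (f t) (g t)) -> PC k a b.
Proof.
  intros Hf Hg Hk. apply PC_map with (f := fun t => h (f t) (g t)).
  - apply (@PC_comb _ _ _ f g h); auto.
  - intros t1 t2 _ _ E. rewrite !Hk; auto.
Qed.

Lemma PC_ev (E1 E2 : lexpr) a b : PC (fun t => ble (ev E1 t) (ev E2 t)) a b.
Proof.
  revert E2; induction E1 as [a1 b1|x IHx y IHy|x IHx y IHy]; intros E2.
  - induction E2 as [a2 b2|x IHx y IHy|x IHx y IHy].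
    + apply PC_aff.
    + apply (PC_bool2 IHx IHy (h := andb)). intros; simpl; apply ble_minr.
    + apply (PC_bool2 IHx IHy (h := orb)). intros; simpl; apply ble_maxr.
  - apply (PC_bool2 (IHx E2) (IHy E2) (h := orb)). intros; simpl; apply ble_minl.
  - apply (PC_bool2 (IHx E2) (IHy E2) (h := andb)). intros; simpl; apply ble_maxl.
Qed.

Lemma PC_ev_eq (E1 E2 : lexpr) a b : PC (fun t => beq (ev E1 t) (ev E2 t)) a b.
Proof.
  apply (PC_bool2 (PC_ev E1 E2 a b) (PC_ev E2 E1 a b) (h := andb)). intros; apply beq_ble.
Qed.


Lemma const_open_integrable (f : R -> R) a b c : a <= b -> (forall x, a < x < b -> f x = c) ->
  Riemann_integrable f a b.
Proof.
  intros Hab Hc eps.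
  assert (Had : adapted_couple f a b (a :: b :: nil) (c :: nil)).
  { unfold adapted_couple; repeat split.
    - unfold ordered_Rlist; intros i Hi; simpl in Hi. destruct i; [simpl; auto| lia].
    - simpl; unfold Rmin; destruct (Rle_dec a b); [auto| lra].
    - simpl; unfold Rmax; destruct (Rle_dec a b); [auto| lra].
    - intros i Hi; simpl in Hi. destruct i; [|lia]. unfold constant_D_eq, open_interval; simpl.
      intros x Hx; apply Hc; auto. }
  exists (mkStepFun (existT _ (a :: b :: nil) (existT _ (c :: nil) Had))).
  exists (mkStepFun (StepFun_P4 a b 0)). split.
  - intros t _. simpl. unfold fct_cte. rewrite Rminus_diag Rabs_R0. lra.
  - rewrite StepFun_P18. rewrite Rmult_0_l Rabs_R0. apply cond_pos.
Qed.

Lemma PC_integrable_aux (f : R -> R) (L : list R) : forall a b, a <= b ->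
  (forall t1 t2, a < t1 -> t1 <= t2 -> t2 < b -> (forall p, In p L -> ~ (t1 <= p <= t2)) -> f t1 = f t2) ->
  inhabited (Riemann_integrable f a b).
Proof.
  induction L as [|p L IH]; intros a b Hab H.
  - destruct (Req_EM_T a b) as [<-|Hne]; [constructor; apply RiemannInt_P7|].
    constructor. apply const_open_integrable with (f ((a + b) / 2)); auto.
    intros x Hx. destruct (Rle_dec x ((a + b) / 2)).
    + apply H; try lra. intros _ [].
    + symmetry; apply H; try lra. intros _ [].
  - destruct (Rlt_dec a p) as [Hap|Hap]; [destruct (Rlt_dec p b) as [Hpb|Hpb]|].
    + destruct (IH a p) as [I1]; [lra| |].
      { intros t1 t2 ? ? ? Hp. apply H; try lra. intros q [<-|Hq]; [lra| apply Hp; auto]. }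
      destruct (IH p b) as [I2]; [lra| |].
      { intros t1 t2 ? ? ? Hp. apply H; try lra. intros q [<-|Hq]; [lra| apply Hp; auto]. }
      constructor. apply RiemannInt_P24 with p; auto.
    + apply IH; auto. intros t1 t2 ? ? ? Hp. apply H; try lra. intros q [<-|Hq]; [lra| apply Hp; auto].
    + apply IH; auto. intros t1 t2 ? ? ? Hp. apply H; try lra. intros q [<-|Hq]; [lra| apply Hp; auto].
Qed.

Lemma PC_integrable (f : R -> R) a b : a <= b -> PC f a b -> inhabited (Riemann_integrable f a b).
Proof. intros Hab [L H]. eapply PC_integrable_aux; eauto. Qed.

Lemma PC_ext (A : Type) (f g : R -> A) a b : PC f a b -> (forall t, a < t < b -> f t = g t) -> PC g a b.
Proof.
  intros [L H] E. exists L. intros t1 t2 ? ? ? Hp. rewrite <- !E; try lra. auto.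
Qed.


Lemma integral_val (f : R -> R) a b (pr : Riemann_integrable f a b) : integral f a b = RiemannInt pr.
Proof.
  unfold integral. destruct (excluded_middle_informative _) as [h|h].
  - apply RiemannInt_P5.
  - exfalso; apply h; constructor; exact pr.
Qed.

Lemma RI_zero a b : RiemannInt (RiemannInt_P14 a b 0) = 0.
Proof. rewrite RiemannInt_P15; ring. Qed.

Lemma int_ge0 (f : R -> R) a b : a <= b -> (forall t, a < t < b -> 0 <= f t) -> 0 <= integral f a b.
Proof.
  intros Hab H. unfold integral. destruct (excluded_middle_informative _) as [h|h]; [|lra].
  set pr := epsilon _ _.
  rewrite <- (RI_zero a b).
  apply RiemannInt_P19; auto.
Qed.

Lemma int_le (f : R -> R) a b c : a <= b -> inhabited (Riemann_integrable f a b) ->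
  (forall t, a < t < b -> f t <= c) -> integral f a b <= c * (b - a).
Proof.
  intros Hab [pr] H. rewrite (integral_val pr).
  rewrite <- (RiemannInt_P15 (RiemannInt_P14 a b c)).
  apply RiemannInt_P19; auto.
Qed.

Lemma int_plus (f g : R -> R) a b : inhabited (Riemann_integrable f a b) ->
  inhabited (Riemann_integrable g a b) ->
  inhabited (Riemann_integrable (fun t => f t + g t) a b) /\
  integral (fun t => f t + g t) a b = integral f a b + integral g a b.
Proof.
  intros [pf] [pg].
  pose (p3 := RiemannInt_P10 1 pf pg).
  assert (p4 : Riemann_integrable (fun t => f t + g t) a b).
  { apply Riemann_integrable_ext with (fun x => f x + 1 * g x); auto. intros; ring. }
  split; [constructor; auto|].
  rewrite (integral_val p4) (integral_val pf) (integral_val pg).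
  rewrite <- (Rmult_1_l (RiemannInt pg)). rewrite <- (RiemannInt_P13 pf pg p3).
  destruct (Rle_dec a b).
  - apply RiemannInt_P18; auto. intros; ring.
  - rewrite (RiemannInt_P8 p4 (RiemannInt_P1 p4)) (RiemannInt_P8 p3 (RiemannInt_P1 p3)).
    f_equal. apply RiemannInt_P18; [lra|]. intros; ring.
Qed.

Lemma int_sum (F : nat -> R -> R) (l : list nat) a b :
  (forall j, In j l -> inhabited (Riemann_integrable (F j) a b)) ->
  inhabited (Riemann_integrable (fun t => fold_right Rplus 0 (List.map (fun j => F j t) l)) a b) /\
  integral (fun t => fold_right Rplus 0 (List.map (fun j => F j t) l)) a b =
  fold_right Rplus 0 (List.map (fun j => integral (F j) a b) l).
Proof.
  induction l as [|j l IH]; intros H; simpl.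
  - split; [constructor; apply (RiemannInt_P14 a b 0)|].
    assert (pr : Riemann_integrable (fun _ : R => 0) a b) by apply (RiemannInt_P14 a b 0).
    rewrite (integral_val pr). apply (RiemannInt_P15 pr) || (rewrite (RiemannInt_P15 pr); ring).
  - destruct IH as [I1 E1]; [intros; apply H; right; auto|].
    destruct (int_plus (H j (or_introl erefl)) I1) as [I2 E2].
    split; auto. rewrite E2 E1. auto.
Qed.

Lemma int_interval (f : R -> R) a b c d : a <= c -> c <= d -> d <= b ->
  inhabited (Riemann_integrable f a b) ->
  (forall t, a < t < b -> 0 <= f t) -> (forall t, c < t < d -> 1 <= f t) ->
  d - c <= integral f a b.
Proof.
  intros Hac Hcd Hdb [pr] H0 H1. rewrite (integral_val pr).
  pose (Iac := RiemannInt_P22 pr (conj Hac (Rle_trans _ _ _ Hcd Hdb))).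
  pose (Icb := RiemannInt_P23 pr (conj Hac (Rle_trans _ _ _ Hcd Hdb))).
  pose (Icd := RiemannInt_P22 Icb (conj Hcd Hdb)).
  pose (Idb := RiemannInt_P23 Icb (conj Hcd Hdb)).
  rewrite <- (RiemannInt_P26 Iac Icb pr). rewrite <- (RiemannInt_P26 Icd Idb Icb).
  assert (0 <= RiemannInt Iac).
  { rewrite <- (RI_zero a c).
    apply RiemannInt_P19; auto. intros; unfold fct_cte; apply H0; lra. }
  assert (0 <= RiemannInt Idb).
  { rewrite <- (RI_zero d b).
    apply RiemannInt_P19; auto. intros; unfold fct_cte; apply H0; lra. }
  assert (d - c <= RiemannInt Icd).
  { replace (d - c) with (1 * (d - c)) by ring.
    rewrite <- (RiemannInt_P15 (RiemannInt_P14 c d 1)).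
    apply RiemannInt_P19; auto. }
  lra.
Qed.


Definition Sum (A : Type) (g : A -> R) (l : list A) : R := fold_right Rplus 0 (List.map g l).

Lemma Sum_split (A : Type) (g : A -> R) (P : A -> bool) l :
  Sum g l = Sum g (List.filter P l) + Sum g (List.filter (fun j => negb (P j)) l).
Proof.
  induction l as [|a l IH]; simpl; [unfold Sum; simpl; ring|].
  destruct (P a); simpl; unfold Sum in *; simpl; rewrite IH; ring.
Qed.

Lemma Sum_ext (A : Type) (g h : A -> R) l : (forall j, In j l -> g j = h j) -> Sum g l = Sum h l.
Proof.
  induction l as [|a l IH]; intros H; unfold Sum in *; simpl; auto.
  rewrite H; [|left; auto]. rewrite IH; auto. intros; apply H; right; auto.
Qed.

Lemma Sum_const (A : Type) c (l : list A) : Sum (fun _ => c) l = INR (length l) * c.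
Proof.
  induction l as [|a l IH]; unfold Sum in *; [simpl; ring|].
  change (length (a :: l)) with (S (length l)). rewrite S_INR Rmult_plus_distr_r -IH. simpl. ring.
Qed.

Lemma Sum_le (A : Type) (g h : A -> R) l : (forall j, In j l -> g j <= h j) -> Sum g l <= Sum h l.
Proof.
  induction l as [|a l IH]; intros H; unfold Sum in *; simpl; [lra|].
  pose proof (H a (or_introl erefl)). pose proof (IH (fun j Hj => H j (or_intror Hj))). lra.
Qed.

Lemma Sum_ge0 (A : Type) (g : A -> R) l : (forall j, In j l -> 0 <= g j) -> 0 <= Sum g l.
Proof.
  intros H. replace 0 with (Sum (fun _ : A => 0) l).
  - apply Sum_le; auto.
  - rewrite Sum_const; ring.
Qed.

Lemma Sum_filter (A : Type) (g : A -> R) (P : A -> bool) l :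
  Sum (fun j => if P j then g j else 0) l = Sum g (List.filter P l).
Proof.
  induction l as [|a l IH]; unfold Sum in *; simpl; auto.
  destruct (P a); simpl; rewrite IH; ring.
Qed.

Lemma Sum_mult (A : Type) (g : A -> R) c l : Sum (fun j => c * g j) l = c * Sum g l.
Proof. induction l as [|a l IH]; unfold Sum in *; simpl; [ring| rewrite IH; ring]. Qed.

Lemma Sum_swap (A B : Type) (g : A -> B -> R) (l1 : list A) (l2 : list B) :
  Sum (fun i => Sum (g i) l2) l1 = Sum (fun j => Sum (fun i => g i j) l1) l2.
Proof.
  induction l1 as [|a l1 IH]; unfold Sum in *; simpl.
  - induction l2; simpl; auto. rewrite <- IHl2; ring.
  - rewrite IH. clear IH. induction l2 as [|b l2 IH2]; simpl; [ring|]. rewrite <- IH2. ring.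
Qed.

Definition cnt (G : network) (x : profile G) (l : list nat) (i : nat) : nat :=
  length (List.filter (fun j => if point_eq_dec (x j) (x i) then true else false) l).

Lemma filter_length_le (A : Type) (P : A -> bool) l : (length (List.filter P l) <= length l)%coq_nat.
Proof. induction l; simpl; auto. destruct (P a); simpl; lia. Qed.

Lemma nodup_len_split (G : network) (x : profile G) (i : nat) (l : list nat) :
  In i l ->
  length (nodup (@point_eq_dec G) (List.map x l)) =
  S (length (nodup (@point_eq_dec G) (List.map x
      (List.filter (fun j => negb (if point_eq_dec (x j) (x i) then true else false)) l)))).
Proof.
  intros Hi. set l' := List.filter _ l.
  set A := nodup _ (List.map x l). set B := nodup _ (List.map x l').
  assert (HA : NoDup A) by apply NoDup_nodup.
  assert (HB : NoDup (x i :: B)).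
  { constructor; [|apply NoDup_nodup]. unfold B. rewrite nodup_In. rewrite in_map_iff.
    intros [j [Ej Hj]]. unfold l' in Hj. apply filter_In in Hj. destruct Hj as [_ Hj].
    destruct (point_eq_dec (x j) (x i)); simpl in Hj; [discriminate| auto]. }
  assert (I1 : incl A (x i :: B)).
  { intros p Hp. unfold A in Hp. rewrite nodup_In in_map_iff in Hp. destruct Hp as [j [<- Hj]].
    destruct (point_eq_dec (x j) (x i)) as [E|E]; [left; auto|right].
    unfold B. rewrite nodup_In. apply in_map. unfold l'. apply filter_In. split; auto.
    destruct (point_eq_dec (x j) (x i)); simpl; auto; contradiction. }
  assert (I2 : incl (x i :: B) A).
  { intros p [<-|Hp]; unfold A; rewrite nodup_In; [apply in_map; auto|].
    unfold B in Hp. rewrite nodup_In in_map_iff in Hp. destruct Hp as [j [<- Hj]].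
    apply in_map. unfold l' in Hj. apply filter_In in Hj. tauto. }
  pose proof (NoDup_incl_length HA I1). pose proof (NoDup_incl_length HB I2). simpl in *. lia.
Qed.

Lemma filter_sub (A : Type) (Q R : A -> bool) l : (forall k, Q k = true -> R k = true) ->
  List.filter Q (List.filter R l) = List.filter Q l.
Proof.
  intros H; induction l as [|a l IH]; simpl; auto.
  destruct (R a) eqn:Ra; simpl; destruct (Q a) eqn:Qa; rewrite ?IH; auto.
  rewrite (H a Qa) in Ra; discriminate.
Qed.

Lemma cnt_identity (G : network) (x : profile G) : forall N (l : list nat), (length l <= N)%coq_nat ->
  Sum (fun i => / INR (cnt x l i)) l = INR (length (nodup (@point_eq_dec G) (List.map x l))).
Proof.
  induction N as [|N IH]; intros l Hl.
  - destruct l; simpl in *; [unfold Sum; simpl; auto| lia].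
  - destruct l as [|i rest]; [unfold Sum; simpl; auto|].
    set l := i :: rest.
    set P := fun j => if point_eq_dec (x j) (x i) then true else false.
    rewrite (Sum_split _ P).
    set l' := List.filter (fun j => negb (P j)) l.
    assert (Hl' : (length l' < length l)%coq_nat).
    { unfold l', l; simpl. unfold P at 1. destruct (point_eq_dec (x i) (x i)); [|congruence]. simpl.
      pose proof (filter_length_le (fun j => negb (P j)) rest). lia. }
    assert (E1 : Sum (fun i0 => / INR (cnt x l i0)) (List.filter P l) = 1).
    { rewrite (Sum_ext (h := fun _ => / INR (cnt x l i))).
      - rewrite Sum_const. unfold cnt. fold P.
        assert (0 < INR (length (List.filter P l))).
        { apply lt_0_INR. unfold l; simpl. unfold P at 1. destruct (point_eq_dec (x i) (x i)); [simpl; lia| congruence]. }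
        field. lra.
      - intros j Hj. apply filter_In in Hj. destruct Hj as [_ Hj]. unfold P in Hj.
        destruct (point_eq_dec (x j) (x i)) as [E|E]; [|discriminate].
        unfold cnt. rewrite E. auto. }
    assert (E2 : Sum (fun i0 => / INR (cnt x l i0)) l' = Sum (fun i0 => / INR (cnt x l' i0)) l').
    { apply Sum_ext. intros j Hj. unfold l' in Hj. apply filter_In in Hj. destruct Hj as [_ Hj].
      unfold P in Hj. destruct (point_eq_dec (x j) (x i)) as [E|E]; [discriminate|].
      unfold cnt, l'. rewrite filter_sub; auto.
      intros k. unfold P. destruct (point_eq_dec (x k) (x j)) as [E'|E']; [|discriminate].
      destruct (point_eq_dec (x k) (x i)) as [E''|E'']; simpl; auto. exfalso; apply E; congruence. }
    rewrite E1. fold l'. rewrite E2. rewrite IH; [|(unfold l', l in *; lia)].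
    rewrite (nodup_len_split x (l := l) (i := i)); [|left; auto]. rewrite S_INR. rewrite Rplus_comm. reflexivity.
Qed.


Lemma my_Rinv_ge0 (x : R) : 0 <= x -> 0 <= / x.
Proof.
  intros [H|<-]; [left; apply Rinv_0_lt_compat; auto| rewrite Rinv_0; lra].
Qed.

Lemma share_nonneg (G : network) n (x : profile G) i y : 0 <= share n x i y.
Proof.
  unfold share. destruct (Req_EM_T _ _); simpl; [|lra]. apply my_Rinv_ge0.
  apply Rmult_le_pos; apply pos_INR.
Qed.

Lemma filter_filter_len (A : Type) (P Q : A -> bool) l :
  (length (List.filter P (List.filter Q l)) <= length (List.filter P l))%coq_nat.
Proof.
  induction l as [|a l IH]; simpl; auto. destruct (Q a); simpl; destruct (P a); simpl; lia.
Qed.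

Lemma cnt_pos (G : network) (x : profile G) l i : In i l -> (0 < cnt x l i)%coq_nat.
Proof.
  intros H. unfold cnt. destruct (List.filter _ l) eqn:E; simpl; [|lia].
  assert (In i (List.filter (fun j => if point_eq_dec (x j) (x i) then true else false) l)).
  { apply filter_In; split; auto. destruct (point_eq_dec (x i) (x i)); auto. }
  rewrite E in H0; destruct H0.
Qed.

Lemma sum_share_le1 (G : network) n (x : profile G) y :
  Sum (fun i => share n x i y) (List.seq 0 n) <= 1.
Proof.
  set cl := closest_players n x y.
  set K := INR (n_closest_locs n x y).
  assert (E : Sum (fun i => share n x i y) (List.seq 0 n) =
              Sum (fun i => / (K * INR (cnt x (List.seq 0 n) i))) cl).
  { unfold cl, closest_players. rewrite <- Sum_filter. apply Sum_ext. intros j _.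
    unfold share. destruct (Req_EM_T _ _); auto. }
  rewrite E.
  destruct cl as [|i0 cl'] eqn:Ecl; [unfold Sum; simpl; lra|].
  rewrite <- Ecl.
  assert (HK : 0 < K).
  { unfold K, n_closest_locs. fold cl. apply lt_0_INR.
    assert (In (x i0) (nodup (@point_eq_dec G) (List.map x cl))).
    { rewrite nodup_In. apply in_map. rewrite Ecl; left; auto. }
    destruct (nodup _ _); simpl in *; [tauto| lia]. }
  apply Rle_trans with (Sum (fun i => / K * / INR (cnt x cl i)) cl).
  - apply Sum_le. intros j Hj. rewrite Rinv_mult.
    assert (H1 : (0 < cnt x cl j)%coq_nat) by (apply cnt_pos; auto).
    assert (H2 : (cnt x cl j <= cnt x (List.seq 0 n) j)%coq_nat).
    { unfold cnt, cl, closest_players. apply filter_filter_len. }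
    apply Rmult_le_compat_l; [left; apply Rinv_0_lt_compat; auto|].
    apply Rinv_le_contravar; [apply lt_0_INR; auto| apply le_INR; auto].
  - rewrite Sum_mult. rewrite (cnt_identity x (le_n _)). unfold K, n_closest_locs. fold cl.
    rewrite Rinv_l; [lra|]. unfold K, n_closest_locs in HK. fold cl in HK. lra.
Qed.


Definition EMd (G : network) n (x : profile G) (e : edge G) : lexpr :=
  fold_right EMin (Eq (x 0%nat) e) (List.map (fun j => Eq (x j) e) (List.seq 0 n)).

Lemma mind_ev (G : network) (lp : forall e : edge G, 0 < len e)
  (nl : forall e : edge G, src e <> tgt e) (conn : connected_graph G) n (x : profile G) e t :
  0 < t < len e -> mind n x (Int e t) = ev (EMd n x e) t.
Proof.
  intros Ht. unfold mind, EMd. induction (List.seq 0 n) as [|j l IH]; simpl.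
  - apply dist_formula; auto.
  - rewrite IH. rewrite (dist_formula lp nl conn (x j) Ht). auto.
Qed.

Definition bl (G : network) n (x : profile G) (y : point G) : list bool :=
  List.map (fun j => beq (dist (x j) y) (mind n x y)) (List.seq 0 n).

Lemma map_eq_in (A B : Type) (f g : A -> B) l j : List.map f l = List.map g l -> In j l -> f j = g j.
Proof.
  induction l as [|a l IH]; simpl; [tauto|]. intros E [<-|H]; inversion E; auto.
Qed.

Lemma share_dep (G : network) n (x : profile G) i (y1 y2 : point G) :
  (i < n)%coq_nat -> bl n x y1 = bl n x y2 -> share n x i y1 = share n x i y2.
Proof.
  intros Hi E.
  assert (Hcl : closest_players n x y1 = closest_players n x y2).
  { unfold closest_players. apply filter_ext_in. intros j Hj.
    exact (map_eq_in E Hj). }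
  assert (Hii : In i (List.seq 0 n)) by (apply in_seq; lia).
  pose proof (map_eq_in E Hii) as Ei. simpl in Ei. unfold beq in Ei.
  unfold share, n_closest_locs. rewrite Hcl.
  destruct (Req_EM_T (dist (x i) y1) _); destruct (Req_EM_T (dist (x i) y2) _); simpl in *; auto; discriminate.
Qed.

Lemma share_PC (G : network) (lp : forall e : edge G, 0 < len e)
  (nl : forall e : edge G, src e <> tgt e) (conn : connected_graph G) n (x : profile G) i e :
  (i < n)%coq_nat -> PC (fun t => share n x i (Int e t)) 0 (len e).
Proof.
  intros Hi.
  assert (Hbl : PC (fun t => bl n x (Int e t)) 0 (len e)).
  { apply PC_ext with (fun t => List.map (fun j => beq (ev (Eq (x j) e) t) (ev (EMd n x e) t)) (List.seq 0 n)).
    - apply (@PC_list _ (fun j t => beq (ev (Eq (x j) e) t) (ev (EMd n x e) t))).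
      intros j _. apply PC_ev_eq.
    - intros t Ht. unfold bl. apply map_ext. intros j.
      rewrite (dist_formula lp nl conn (x j) Ht). rewrite (mind_ev lp nl conn n x Ht). auto. }
  apply PC_map with (1 := Hbl). intros t1 t2 _ _ E. apply share_dep; auto.
Qed.

Lemma share_int (G : network) (lp : forall e : edge G, 0 < len e)
  (nl : forall e : edge G, src e <> tgt e) (conn : connected_graph G) n (x : profile G) i e :
  (i < n)%coq_nat -> inhabited (Riemann_integrable (fun t => share n x i (Int e t)) 0 (len e)).
Proof.
  intros Hi. apply PC_integrable; [left; apply lp|]. apply share_PC; auto.
Qed.


Lemma payoff_sum (G : network) (lp : forall e : edge G, 0 < len e)
  (nl : forall e : edge G, src e <> tgt e) (conn : connected_graph G) n (x : profile G) :
  Sum (fun i => payoff n x i) (List.seq 0 n) <= total_length G.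
Proof.
  unfold payoff. fold (Sum (fun e => integral (fun t => share n x 0 (Int e t)) 0 (len e)) (enum (edge G))).
  change (Sum (fun i => Sum (fun e => integral (fun t => share n x i (Int e t)) 0 (len e)) (enum (edge G))) (List.seq 0 n) <= Sum (@len G) (enum (edge G))).
  rewrite Sum_swap. apply Sum_le. intros e _.
  destruct (@int_sum (fun i t => share n x i (Int e t)) (List.seq 0 n) 0 (len e)) as [I E].
  { intros j Hj. apply share_int; auto. apply in_seq in Hj. lia. }
  unfold Sum. rewrite <- E.
  replace (len e) with (1 * (len e - 0)) at 2 by ring.
  apply int_le; auto; [left; apply lp|]. intros t _. apply sum_share_le1.
Qed.

Lemma Sum_lt (A : Type) (g h : A -> R) l : l <> nil -> (forall j, In j l -> g j < h j) -> Sum g l < Sum h l.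
Proof.
  destruct l as [|a l]; [tauto|]. intros _ H. unfold Sum; simpl.
  pose proof (H a (or_introl erefl)).
  assert (Sum g l <= Sum h l) by (apply Sum_le; intros; left; apply H; right; auto).
  unfold Sum in H1. lra.
Qed.

Lemma poor_player (G : network) (lp : forall e : edge G, 0 < len e)
  (nl : forall e : edge G, src e <> tgt e) (conn : connected_graph G) n (x : profile G) :
  (0 < n)%coq_nat -> exists i, (i < n)%coq_nat /\ payoff n x i <= total_length G / INR n.
Proof.
  intros Hn. apply NNPP. intros Hno.
  assert (Hlt : Sum (fun _ => total_length G / INR n) (List.seq 0 n) < Sum (fun i => payoff n x i) (List.seq 0 n)).
  { apply Sum_lt.
    - destruct n; [lia| simpl; discriminate].
    - intros j Hj. apply in_seq in Hj. apply Rnot_le_lt. intros Hle. apply Hno. exists j; split; auto; lia. }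
  rewrite Sum_const seq_length in Hlt.
  pose proof (payoff_sum lp nl conn n x).
  assert (INR n * (total_length G / INR n) = total_length G).
  { field. apply not_0_INR. lia. }
  lra.
Qed.


Definition mI (G : network) (h : edge G -> R -> R) (e : edge G) : R := integral (h e) 0 (len e).

Definition ball_hyp (G : network) (y : point G) (r : R) (h : edge G -> R -> R) : Prop :=
  (forall e, inhabited (Riemann_integrable (h e) 0 (len e))) /\
  (forall e t, 0 < t < len e -> 0 <= h e t) /\
  (forall e t, 0 < t < len e -> dist (Int e t) y < r -> 1 <= h e t).

Lemma mI_ge0 (G : network) (lp : forall e : edge G, 0 < len e) (y : point G) r h (H : ball_hyp y r h) e :
  0 <= mI h e.
Proof. destruct H as [_ [H _]]. apply int_ge0; [left; apply lp| apply H]. Qed.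

Lemma mI_interval (G : network) (y : point G) r h (H : ball_hyp y r h) (e : edge G) c d :
  0 <= c -> c <= d -> d <= len e -> (forall t, c < t < d -> dist (Int e t) y < r) -> d - c <= mI h e.
Proof.
  destruct H as [HI [H0 H1]]. intros Hc Hcd Hd Hdist. unfold mI. apply int_interval; auto.
  intros t Ht. apply H1; [lra| apply Hdist; auto].
Qed.

Lemma Sum_nodup_le (G : network) (m : edge G -> R) (C : list (edge G)) :
  (forall e, 0 <= m e) -> NoDup C -> Sum m C <= Sum m (enum (edge G)).
Proof.
  intros Hm. assert (Hinc : incl C (enum (edge G))) by (intros e _; apply in_enum_edge).
  revert C Hinc. induction (enum (edge G)) as [|a L IH]; intros C Hinc HC.
  - destruct C as [|c C]; [unfold Sum; simpl; lra| exfalso; apply (Hinc c); left; auto].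
  - rewrite (Sum_split m (fun e => e == a)).
    assert (H1 : Sum m (List.filter (fun e => e == a) C) <= m a).
    { assert (Hl : (length (List.filter (fun e => e == a) C) <= 1)%coq_nat).
      { change 1%nat with (length (a :: nil)). apply NoDup_incl_length; [apply NoDup_filter; auto|].
        intros e He. apply filter_In in He. destruct He as [_ He]. move/eqP: He => ->. left; auto. }
      destruct (List.filter (fun e => e == a) C) as [|b [|b' l]] eqn:E; simpl in Hl; try lia.
      - unfold Sum; simpl. apply Hm.
      - assert (In b (List.filter (fun e => e == a) C)) by (rewrite E; left; auto).
        apply filter_In in H. destruct H as [_ H]. move/eqP: H => ->. unfold Sum; simpl. lra. }
    assert (H2 : Sum m (List.filter (fun e => negb (e == a)) C) <= Sum m L).
    { apply IH; [|apply NoDup_filter; auto].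
      intros e He. apply filter_In in He. destruct He as [He Hn].
      destruct (Hinc e He) as [<-|Hin]; auto. rewrite eqxx in Hn. discriminate. }
    eapply Rle_trans; [apply Rplus_le_compat; [exact H1| exact H2]|]. unfold Sum; simpl; lra.
Qed.

Lemma min_arith (r d u l : R) : 0 <= u -> 0 <= l -> d <= l + u ->
  Rmin r d <= Rmin l (Rmax 0 (r - u)) + Rmin r u.
Proof.
  intros. unfold Rmin, Rmax. repeat destruct (Rle_dec _ _); lra.
Qed.


Lemma dist_same (G : network) (lp : forall e : edge G, 0 < len e) (conn : connected_graph G)
  (e : edge G) s t : dist (Int e t) (Int e s) <= Rabs (t - s).
Proof. apply d_le; auto. left; exists e, t, s; auto. Qed.

Lemma dist_vv (G : network) (lp : forall e : edge G, 0 < len e) (conn : connected_graph G)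
  (e : edge G) : dist (Vtx (src e)) (Vtx (tgt e)) <= len e /\ dist (Vtx (tgt e)) (Vtx (src e)) <= len e.
Proof.
  split; apply d_le; auto; right.
  - exists (src e), (tgt e), 0, (len e), 0; simpl; repeat split; [apply walk_edge_fwd| ring].
  - exists (tgt e), (src e), 0, (len e), 0; simpl; repeat split; [apply walk_edge_bwd| ring].
Qed.


Definition onY (G : network) (y : point G) (e : edge G) : Prop := exists s, y = Int e s.
Definition top (G : network) (y : point G) (e : edge G) : R :=
  Rmax (dist (Vtx (src e)) y) (dist (Vtx (tgt e)) y).
Definition desc (G : network) (y : point G) (v : vert G) (e : edge G) : Prop :=
  (src e = v /\ dist (Vtx (tgt e)) y <= dist (Vtx v) y - len e) \/
  (tgt e = v /\ dist (Vtx (src e)) y <= dist (Vtx v) y - len e).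

Lemma m_left (G : network) (lp : forall e : edge G, 0 < len e) (conn : connected_graph G)
  (y : point G) r h (H : ball_hyp y r h) e s : y = Int e s -> 0 < s < len e -> Rmin r s <= mI h e.
Proof.
  intros -> Hs. destruct (Rle_dec r 0). { pose proof (mI_ge0 lp H e). unfold Rmin; destruct (Rle_dec r s); lra. }
  replace (Rmin r s) with (s - (s - Rmin r s)) by ring.
  apply (mI_interval H); try (unfold Rmin; destruct (Rle_dec r s); lra).
  intros t Ht. eapply Rle_lt_trans; [apply dist_same; auto|].
  rewrite Rabs_left; [|lra]. unfold Rmin in *; destruct (Rle_dec r s); lra.
Qed.

Lemma m_right (G : network) (lp : forall e : edge G, 0 < len e) (conn : connected_graph G)
  (y : point G) r h (H : ball_hyp y r h) e s : y = Int e s -> 0 < s < len e -> Rmin r (len e - s) <= mI h e.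
Proof.
  intros -> Hs. destruct (Rle_dec r 0). { pose proof (mI_ge0 lp H e). unfold Rmin; destruct (Rle_dec r _); lra. }
  replace (Rmin r (len e - s)) with ((s + Rmin r (len e - s)) - s) by ring.
  apply (mI_interval H); try (unfold Rmin; destruct (Rle_dec r _); lra); [lra|].
  intros t Ht. eapply Rle_lt_trans; [apply dist_same; auto|].
  rewrite Rabs_right; [|lra]. unfold Rmin in *; destruct (Rle_dec r _); lra.
Qed.

Lemma m_near_src (G : network) (lp : forall e : edge G, 0 < len e)
  (nl : forall e : edge G, src e <> tgt e) (conn : connected_graph G)
  (y : point G) r h (H : ball_hyp y r h) e w : 0 <= w <= len e ->
  Rmin w (Rmax 0 (r - dist (Vtx (src e)) y)) <= mI h e.
Proof.
  intros Hw. set W := Rmin w _.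
  assert (HW : 0 <= W <= w /\ (0 < W -> W <= r - dist (Vtx (src e)) y)).
  { unfold W, Rmin, Rmax. repeat destruct (Rle_dec _ _); lra. }
  replace W with (W - 0) by ring.
  apply (mI_interval H); try lra.
  intros t Ht.
  eapply Rle_lt_trans; [exact (d_tri lp nl conn (Int e t) y (z := Vtx (src e)) I)|].
  pose proof (dist_Int_src lp conn e t). lra.
Qed.

Lemma m_near_tgt (G : network) (lp : forall e : edge G, 0 < len e)
  (nl : forall e : edge G, src e <> tgt e) (conn : connected_graph G)
  (y : point G) r h (H : ball_hyp y r h) e w : 0 <= w <= len e ->
  Rmin w (Rmax 0 (r - dist (Vtx (tgt e)) y)) <= mI h e.
Proof.
  intros Hw. set W := Rmin w _.
  assert (HW : 0 <= W <= w /\ (0 < W -> W <= r - dist (Vtx (tgt e)) y)).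
  { unfold W, Rmin, Rmax. repeat destruct (Rle_dec _ _); lra. }
  replace W with (len e - (len e - W)) by ring.
  apply (mI_interval H); try lra.
  intros t Ht.
  eapply Rle_lt_trans; [exact (d_tri lp nl conn (Int e t) y (z := Vtx (tgt e)) I)|].
  pose proof (dist_Int_tgt lp conn e t). lra.
Qed.


Lemma onY_bounds (G : network) (lp : forall e : edge G, 0 < len e) (conn : connected_graph G)
  (y : point G) e s : y = Int e s ->
  dist (Vtx (src e)) y <= s /\ dist (Vtx (tgt e)) y <= len e - s.
Proof.
  intros ->. rewrite !(d_sym lp conn (Vtx _)). split; [apply dist_Int_src| apply dist_Int_tgt]; auto.
Qed.

Definition chain_inv (G : network) (y : point G) r h (v : vert G) (C : list (edge G)) : Prop :=
  NoDup C /\ (forall e, In e C -> onY y e \/ top y e < dist (Vtx v) y \/ desc y v e) /\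
  Rmin r (dist (Vtx v) y) <= Sum (mI h) C.

Lemma chain_step (G : network) (lp : forall e : edge G, 0 < len e)
  (nl : forall e : edge G, src e <> tgt e) (conn : connected_graph G)
  (y : point G) (Hy : valid_point y) r h (H : ball_hyp y r h) (v u : vert G) (e : edge G) C :
  ((src e = v /\ tgt e = u) \/ (tgt e = v /\ src e = u)) ->
  dist (Vtx u) y <= dist (Vtx v) y - len e ->
  chain_inv y r h u C -> chain_inv y r h v (e :: C).
Proof.
  intros Hvu Hle [HC1 [HC2 HC3]].
  set dv := dist (Vtx v) y. set du := dist (Vtx u) y. fold du dv in Hle.
  pose proof (lp e) as Hl.
  assert (Hdu : 0 <= du) by (apply d_nonneg; auto; exact I).
  assert (Hvle : dv <= len e + du).
  { unfold dv, du. eapply Rle_trans; [exact (d_tri lp nl conn (Vtx v) y (z := Vtx u) I)|].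
    destruct (dist_vv lp conn e). destruct Hvu as [[<- <-]|[<- <-]]; lra. }
  assert (Htop : top y e = dv).
  { unfold top. destruct Hvu as [[-> ->]|[-> ->]]; fold dv du; unfold Rmax; destruct (Rle_dec _ _); lra. }
  split; [|split].
  - constructor; auto. intros Hin. destruct (HC2 e Hin) as [[s Hs]|[Ht|Hd]].
    + pose proof Hy as Hy'. rewrite Hs in Hy'. simpl in Hy'. destruct (onY_bounds lp conn Hs) as [B1 B2].
      destruct Hvu as [[E1 E2]|[E1 E2]]; rewrite ?E1 ?E2 in B1 B2; unfold dv, du in *; lra.
    + fold du in Ht. lra.
    + unfold desc in Hd. fold du in Hd. destruct Hvu as [[E1 E2]|[E1 E2]]; destruct Hd as [[F1 F2]|[F1 F2]].
      * apply (nl e); congruence.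
      * rewrite E1 in F2; fold dv in F2; lra.
      * rewrite E1 in F2; fold dv in F2; lra.
      * apply (nl e); congruence.
  - intros f [<-|Hf].
    + right; right. unfold desc. fold dv. destruct Hvu as [[E1 E2]|[E1 E2]]; [left|right]; rewrite E2; fold du; split; auto.
    + destruct (HC2 f Hf) as [Hy'|[Ht|Hd]]; [left; auto|right; left; fold du in Ht; fold dv; lra|].
      right; left. fold dv. unfold desc in Hd; fold du in Hd. unfold top.
      destruct Hd as [[-> F]|[-> F]]; fold du; pose proof (lp f); unfold Rmax; destruct (Rle_dec _ _); lra.
  - fold dv. unfold Sum; simpl. fold (Sum (mI h) C). fold du dv in HC3.
    eapply Rle_trans; [apply (min_arith r (l := len e) Hdu (Rlt_le _ _ Hl) Hvle)|].
    apply Rplus_le_compat; auto.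
    destruct Hvu as [[E1 E2]|[E1 E2]].
    + pose proof (@m_near_tgt G lp nl conn y r h H e (len e)) as M. rewrite E2 in M. apply M. lra.
    + pose proof (@m_near_src G lp nl conn y r h H e (len e)) as M. rewrite E2 in M. apply M. lra.
Qed.

Lemma vchain (G : network) (lp : forall e : edge G, 0 < len e)
  (nl : forall e : edge G, src e <> tgt e) (conn : connected_graph G)
  (y : point G) (Hy : valid_point y) r h (H : ball_hyp y r h) :
  forall N (v : vert G), dist (Vtx v) y <= INR N * lmin G -> exists C, chain_inv y r h v C.
Proof.
  intros N. induction N as [|N IH]; intros v Hv.
  all: destruct (Rle_dec (dist (Vtx v) y) 0) as [H0|H0];
    [exists nil; split; [constructor|split; [intros _ []|]];
     unfold Sum; simpl; pose proof (Rmin_r r (dist (Vtx v) y)); lra|].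
  - simpl in Hv. lra.
  - destruct (d_path lp conn (Vtx v) y) as [[e [s [t [E _]]]]|[a [b [r1 [L0 [r2 [H1 [H2 [H3 HL]]]]]]]]];
      [discriminate E|].
    simpl in H1. destruct H1 as [Ea Er1]. subst r1.
    revert Ea H3 HL. destruct H2 as [u|e w L Hw|e w L Hw]; intros Ea H3 HL.
    + subst u. destruct y as [w'|e s].
      * simpl in H3. destruct H3 as [_ ->]. lra.
      * exists (e :: nil). split; [constructor; [intros []| constructor]|split].
        -- intros f [<-|[]]. left; exists s; auto.
        -- unfold Sum; simpl. rewrite Rplus_0_r. simpl in H3.
           destruct H3 as [[-> ->]|[-> ->]]; rewrite HL.
           ++ replace (0 + 0 + s) with s by ring. apply (m_left lp conn H (erefl _) Hy).
           ++ replace (0 + 0 + (len e - s)) with (len e - s) by ring. apply (m_right lp conn H (erefl _) Hy).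
    + assert (Hu : dist (Vtx (tgt e)) y <= L + r2).
      { apply d_le; auto. right; exists (tgt e), w, 0, L, r2; simpl; repeat split; auto. ring. }
      pose proof (lmin_le e).
      destruct (IH (tgt e)) as [C HC].
      { rewrite S_INR in Hv. lra. }
      exists (e :: C). apply (chain_step lp nl conn Hy H (u := tgt e)); auto. lra.
    + assert (Hu : dist (Vtx (src e)) y <= L + r2).
      { apply d_le; auto. right; exists (src e), w, 0, L, r2; simpl; repeat split; auto. ring. }
      pose proof (lmin_le e).
      destruct (IH (src e)) as [C HC].
      { rewrite S_INR in Hv. lra. }
      exists (e :: C). apply (chain_step lp nl conn Hy H (u := src e)); auto. lra.
Qed.


Lemma exists_N (G : network) (lp : forall e : edge G, 0 < len e) (x : R) :
  exists N : nat, x <= INR N * lmin G.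
Proof.
  pose proof (lmin_pos lp) as Hm.
  destruct (Rle_dec x 0). { exists O; simpl; lra. }
  destruct (archimed (x / lmin G)) as [Hup _].
  exists (Z.to_nat (up (x / lmin G))).
  assert (0 <= x / lmin G) by (unfold Rdiv; apply Rmult_le_pos; [lra| left; apply Rinv_0_lt_compat; lra]).
  rewrite INR_IZR_INZ Z2Nat.id; [|apply le_IZR; lra].
  apply Rmult_le_reg_r with (/ lmin G); [apply Rinv_0_lt_compat; lra|].
  rewrite Rmult_assoc Rinv_r; [|lra]. unfold Rdiv in Hup. lra.
Qed.

Lemma Rmin_mono r a b : a <= b -> Rmin r a <= Rmin r b.
Proof. intros. unfold Rmin. repeat destruct (Rle_dec _ _); lra. Qed.

Lemma ball_lemma (G : network) (lp : forall e : edge G, 0 < len e)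
  (nl : forall e : edge G, src e <> tgt e) (conn : connected_graph G)
  (y : point G) (Hy : valid_point y) r h (H : ball_hyp y r h) (z : point G) (Hz : valid_point z) :
  Rmin r (dist z y) <= Sum (mI h) (enum (edge G)).
Proof.
  assert (Hm : forall e, 0 <= mI h e) by (intros; apply (mI_ge0 lp H)).
  assert (Hchain : forall v : vert G, exists C, chain_inv y r h v C).
  { intros v. destruct (exists_N lp (dist (Vtx v) y)) as [N HN]. eapply vchain; eauto. }
  destruct z as [v|f s].
  - destruct (Hchain v) as [C [HC1 [_ HC3]]]. eapply Rle_trans; [exact HC3|]. apply Sum_nodup_le; auto.
  - simpl in Hz.
    assert (Hone : mI h f <= Sum (mI h) (enum (edge G))).
    { replace (mI h f) with (Sum (mI h) (f :: nil)) by (unfold Sum; simpl; ring).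
      apply Sum_nodup_le; auto. constructor; [intros []| constructor]. }
    destruct (classic (onY y f)) as [[sy Esy]|HnY].
    + eapply Rle_trans; [|exact Hone].
      pose proof Hy as Hy'. rewrite Esy in Hy'. simpl in Hy'.
      pose proof (dist_same lp conn f sy s) as Hd. rewrite <- Esy in Hd.
      destruct (Rle_dec s sy).
      * rewrite Rabs_left1 in Hd; [|lra].
        eapply Rle_trans; [apply Rmin_mono; exact Hd|].
        eapply Rle_trans; [apply Rmin_mono with (b := sy); lra|]. apply (m_left lp conn H Esy Hy').
      * rewrite Rabs_right in Hd; [|lra].
        eapply Rle_trans; [apply Rmin_mono; exact Hd|].
        eapply Rle_trans; [apply Rmin_mono with (b := len f - sy); lra|]. apply (m_right lp conn H Esy Hy').
    + assert (Ha : dist (Int f s) y <= s + dist (Vtx (src f)) y).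
      { eapply Rle_trans; [exact (d_tri lp nl conn (Int f s) y (z := Vtx (src f)) I)|].
        pose proof (dist_Int_src lp conn f s). lra. }
      assert (Hb : dist (Int f s) y <= len f - s + dist (Vtx (tgt f)) y).
      { eapply Rle_trans; [exact (d_tri lp nl conn (Int f s) y (z := Vtx (tgt f)) I)|].
        pose proof (dist_Int_tgt lp conn f s). lra. }
      assert (Hds : 0 <= dist (Vtx (src f)) y) by (apply d_nonneg; auto; exact I).
      assert (Hdt : 0 <= dist (Vtx (tgt f)) y) by (apply d_nonneg; auto; exact I).
      destruct (Rle_dec (s + dist (Vtx (src f)) y) (len f - s + dist (Vtx (tgt f)) y)) as [Hab|Hab].
      * destruct (Hchain (src f)) as [C [HC1 [HC2 HC3]]].
        assert (HnC : ~ In f C).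
        { intros Hin. destruct (HC2 f Hin) as [Hy1|[Ht|Hd]]; [tauto| |].
          - unfold top in Ht. pose proof (Rmax_l (dist (Vtx (src f)) y) (dist (Vtx (tgt f)) y)). lra.
          - destruct Hd as [[_ F]|[F _]]; [lra| apply (nl f); auto]. }
        eapply Rle_trans; [|apply (Sum_nodup_le (C := f :: C)); auto; constructor; auto].
        unfold Sum; simpl; fold (Sum (mI h) C).
        eapply Rle_trans; [apply Rmin_mono; exact Ha|].
        eapply Rle_trans; [apply (min_arith r (l := s) Hds); lra|].
        apply Rplus_le_compat; auto. apply (m_near_src lp nl conn H). lra.
      * destruct (Hchain (tgt f)) as [C [HC1 [HC2 HC3]]].
        assert (HnC : ~ In f C).
        { intros Hin. destruct (HC2 f Hin) as [Hy1|[Ht|Hd]]; [tauto| |].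
          - unfold top in Ht. pose proof (Rmax_r (dist (Vtx (src f)) y) (dist (Vtx (tgt f)) y)). lra.
          - destruct Hd as [[F _]|[_ F]]; [apply (nl f); auto| lra]. }
        eapply Rle_trans; [|apply (Sum_nodup_le (C := f :: C)); auto; constructor; auto].
        unfold Sum; simpl; fold (Sum (mI h) C).
        eapply Rle_trans; [apply Rmin_mono; exact Hb|].
        eapply Rle_trans; [apply (min_arith r (l := len f - s) Hdt); lra|].
        apply Rplus_le_compat; auto. apply (m_near_tgt lp nl conn H). lra.
Qed.


Lemma fold_min_le (A : Type) (f : A -> R) seed l j : In j l -> fold_right Rmin seed (List.map f l) <= f j.
Proof.
  induction l as [|a l IH]; simpl; [tauto|]. intros [<-|H]; [apply Rmin_l|].
  eapply Rle_trans; [apply Rmin_r| auto].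
Qed.

Lemma fold_min_ge (A : Type) (f : A -> R) seed l c :
  c <= seed -> (forall j, In j l -> c <= f j) -> c <= fold_right Rmin seed (List.map f l).
Proof.
  induction l as [|a l IH]; simpl; auto. intros Hs H. apply Rmin_glb; auto.
Qed.

Lemma filter_single (P : nat -> bool) (l : list nat) i :
  NoDup l -> In i l -> P i = true -> (forall j, In j l -> P j = true -> j = i) ->
  List.filter P l = i :: nil.
Proof.
  induction l as [|a l IH]; simpl; [tauto|]. intros Hnd Hi Pi H.
  inversion Hnd as [|a' l' Ha Hnd']; subst.
  destruct Hi as [<-|Hi].
  - rewrite Pi. f_equal. destruct (List.filter P l) as [|b l''] eqn:E; auto.
    assert (In b (List.filter P l)) by (rewrite E; left; auto).
    apply filter_In in H0. destruct H0 as [Hb Pb]. pose proof (H b (or_intror Hb) Pb) as Eb. subst b. tauto.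
  - destruct (P a) eqn:Pa.
    + rewrite (H a (or_introl erefl) Pa) in Ha. tauto.
    + apply IH; auto.
Qed.

Lemma upd_i (G : network) (x : profile G) i p : update x i p i = p.
Proof. unfold update. rewrite Nat.eqb_refl. auto. Qed.

Lemma upd_j (G : network) (x : profile G) i p j : j <> i -> update x i p j = x j.
Proof. intros H. unfold update. apply Nat.eqb_neq in H. rewrite H. auto. Qed.

Lemma mind_le (G : network) n (x : profile G) y j : (j < n)%coq_nat -> mind n x y <= dist (x j) y.
Proof.
  intros Hj. unfold mind. apply (fold_min_le (fun i => dist (x i) y)). apply in_seq. lia.
Qed.

Lemma share_one (G : network) (lp : forall e : edge G, 0 < len e)
  (nl : forall e : edge G, src e <> tgt e) (conn : connected_graph G)
  n (x : profile G) (Hv : valid_profile n x) (y : point G) (Hy : valid_point y) i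
  (Hi : (i < n)%coq_nat) (w : point G) (Hw : valid_point w) r :
  0 < r -> 2 * r <= mind n x y -> dist w y < r -> share n (update x i y) i w = 1.
Proof.
  intros Hr HD Hwy.
  set x' := update x i y.
  assert (Hxi : x' i = y) by apply upd_i.
  assert (Hdi : dist (x' i) w = dist w y) by (rewrite Hxi; apply d_sym; auto).
  assert (Hfar : forall j, (j < n)%coq_nat -> j <> i -> dist w y < dist (x' j) w).
  { intros j Hj Hji. unfold x'. rewrite upd_j; auto.
    pose proof (mind_le x y Hj).
    pose proof (d_tri lp nl conn (x j) y (z := w) Hw). lra. }
  assert (Hmind : mind n x' w = dist w y).
  { apply Rle_antisym.
    - rewrite <- Hdi. apply mind_le; auto.
    - unfold mind. apply fold_min_ge.
      + destruct (Nat.eq_dec 0 i) as [<-|Hne]; [rewrite Hdi; lra|]. left; apply Hfar; auto; lia.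
      + intros j Hj. apply in_seq in Hj. destruct (Nat.eq_dec j i) as [->|Hne]; [rewrite Hdi; lra|].
        left; apply Hfar; auto; lia. }
  assert (Hcl : closest_players n x' w = i :: nil).
  { unfold closest_players. apply filter_single.
    - apply seq_NoDup.
    - apply in_seq; lia.
    - destruct (Req_EM_T _ _) as [E|E]; simpl; auto. exfalso; apply E. rewrite Hdi Hmind; auto.
    - intros j Hj. apply in_seq in Hj. destruct (Req_EM_T _ _) as [E|E]; simpl; [|discriminate].
      intros _. destruct (Nat.eq_dec j i) as [|Hne]; auto. exfalso.
      specialize (Hfar j ltac:(lia) Hne). rewrite E Hmind in Hfar. lra. }
  assert (Hco : n_colocated n x' i = 1%nat).
  { unfold n_colocated. rewrite (filter_single (i := i)); auto.
    - apply seq_NoDup.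
    - apply in_seq; lia.
    - destruct (point_eq_dec _ _); simpl; auto.
    - intros j Hj. apply in_seq in Hj. destruct (point_eq_dec _ _) as [E|E]; simpl; [|discriminate].
      intros _. destruct (Nat.eq_dec j i) as [|Hne]; auto. exfalso.
      rewrite Hxi in E. unfold x' in E. rewrite upd_j in E; auto.
      assert (Hjn : (j < n)%coq_nat) by lia. pose proof (mind_le x y Hjn). rewrite E in H.
      rewrite (d_refl lp conn Hy) in H. lra. }
  unfold share. rewrite Hco. unfold n_closest_locs. rewrite Hcl. simpl.
  destruct (Req_EM_T _ _) as [E|E]; simpl.
  - field.
  - exfalso; apply E. rewrite Hdi Hmind; auto.
Qed.

Theorem mainTheorem11 (G : network) (n : nat)
  (len_pos : forall e : edge G, 0 < len e)
  (no_loop : forall e : edge G, src e <> tgt e)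
  (no_multi : forall e f : edge G,
      (src e = src f /\ tgt e = tgt f) \/ (src e = tgt f /\ tgt e = src f) -> e = f)
  (conn : connected_graph G)
  (no_deg2 : forall v : vert G, degree v <> 2%N)
  (n_pos : (0 < n)%N)
  (x : profile G) (Hx : nash_eq n x) :
  forall y : point G, valid_point y ->
    mind n x y <= 2 * total_length G / INR n.
Proof.
  intros y Hy. destruct Hx as [Hv Hnash].
  have Hn : (0 < n)%coq_nat by apply/ltP.
  assert (HL : 0 <= total_length G).
  { apply (Sum_ge0 (g := @len G)). intros e _. left; apply len_pos. }
  assert (HnR : 0 < INR n) by (apply lt_0_INR; auto).
  apply Rnot_lt_le. intros HD.
  set D := mind n x y in HD. set r := D / 2.
  assert (Hr : total_length G / INR n < r).
  { unfold r. apply Rmult_lt_reg_r with 2; [lra|].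
    replace (D / 2 * 2) with D by field. unfold Rdiv in *. lra. }
  assert (Hr0 : 0 < r).
  { eapply Rle_lt_trans; [|exact Hr]. unfold Rdiv; apply Rmult_le_pos; auto. left; apply Rinv_0_lt_compat; auto. }
  destruct (poor_player len_pos no_loop conn x Hn) as [i [Hi Hpi]].
  set x' := update x i y.
  have Hi' : (i < n)%N by apply/ltP.
  pose proof (Hnash i y Hi' Hy) as Hdev. fold x' in Hdev.
  assert (Hv' : valid_profile n x').
  { intros j Hj. unfold x', update. destruct (Nat.eqb j i); auto. }
  set h := fun (e : edge G) t => share n x' i (Int e t).
  assert (Hball : ball_hyp y r h).
  { split; [|split].
    - intros e. apply share_int; auto.
    - intros e t _. apply share_nonneg.
    - intros e t Ht Hd. unfold h, x'. rewrite (@share_one G len_pos no_loop conn n x Hv y Hy i Hi (Int e t) Ht r); auto.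
      all: unfold r, D in *; lra. }
  pose proof (ball_lemma len_pos no_loop conn Hy Hball (Hv i Hi')) as Hb.
  assert (Hpay : payoff n x' i = Sum (mI h) (enum (edge G))) by reflexivity.
  assert (Hfar : r <= dist (x i) y).
  { pose proof (mind_le x y Hi). unfold r, D in *. lra. }
  assert (Rmin r (dist (x i) y) = r) by (unfold Rmin; destruct (Rle_dec _ _); lra).
  lra.
Qed.
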